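(* Let $P_k$ be a real symmetric positive semidefinite $n\times n$ matrix, $\tilde P_k\in\mathcal S_n$, and $\hat\Delta_k$ a real symmetric $n\times n$ matrix with nonnegative entries such that $|\tilde P_k-P_k|\leq\hat\Delta_k$ entrywise. Let $S^*_k$ be an optimal solution of $$\min_{S\in\mathcal S_n}\ \operatorname{tr}(\tilde P_k+S)\quad\text{subject to}\quad [S]_{ii}\geq\sum_{j=1}^n[\hat\Delta_k]_{ij}+\sum_{j=1,\,j\neq i}^n|[S]_{ij}|,\ \ i=1,\ldots,n,$$ and set $\hat P_k=\tilde P_k+S_k^*$. Then for every $W\in\{0,1\}^{n\times n}$, $$\|W\odot(\hat P_k-P_k)\|_F\leq\|W\odot(\operatorname{diag}(\hat\Delta_k\mathbf 1)+\hat\Delta_k)\|_F.$$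
   Context: $\mathcal S_n$ denotes the set of real symmetric $n\times n$ matrices; $|M|$ is the entrywise absolute value and $\leq$ between matrices is entrywise; $\odot$ is the entrywise (Hadamard) product; $\|\cdot\|_F$ is the Frobenius norm; $\mathbf 1$ is the all-ones vector; $\operatorname{diag}(v)$ is the diagonal matrix with diagonal $v$. *)

(* Defs.v *)
From mathcomp Require Import all_boot all_order all_algebra.
Set Implicit Arguments. Unset Strict Implicit. Unset Printing Implicit Defensive.
Import Order.TTheory GRing.Theory Num.Theory.
Local Open Scope ring_scope.

Definition symmx (R : pzRingType) (n : nat) (A : 'M[R]_n) : Prop := A^T = A.

Definition psd (R : realFieldType) (n : nat) (A : 'M[R]_n) : Prop :=
  symmx A /\ forall x : 'cV[R]_n, 0 <= (x^T *m A *m x) 0 0.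

Definition hadamard (R : pzRingType) (m n : nat) (A B : 'M[R]_(m, n)) : 'M[R]_(m, n) :=
  \matrix_(i, j) (A i j * B i j).

Definition frob (R : rcfType) (m n : nat) (A : 'M[R]_(m, n)) : R :=
  Num.sqrt (\sum_i \sum_j A i j ^+ 2).

Definition diag_rowsum (R : pzRingType) (n : nat) (D : 'M[R]_n) : 'M[R]_n :=
  diag_mx (\row_i \sum_j D i j).

Definition feasible (R : realDomainType) (n : nat) (Dhat S : 'M[R]_n) : Prop :=
  symmx S /\
  forall i : 'I_n, \sum_j Dhat i j + \sum_(j | j != i) `|S i j| <= S i i.

Definition optimal (R : realDomainType) (n : nat) (Pt Dhat S : 'M[R]_n) : Prop :=
  feasible Dhat S /\
  forall S' : 'M[R]_n, feasible Dhat S' -> \tr (Pt + S) <= \tr (Pt + S').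

(* Main.v *)
Require Import Defs.
From mathcomp Require Import all_boot all_order all_algebra.
Import Order.TTheory GRing.Theory Num.Theory.
Local Open Scope ring_scope.

Theorem mainTheorem4 (R : rcfType) (n : nat) (P Pt Dhat Sstar : 'M[R]_n) :
  psd P ->
  symmx Pt ->
  symmx Dhat ->
  (forall i j, 0 <= Dhat i j) ->
  (forall i j, `|Pt i j - P i j| <= Dhat i j) ->
  optimal Pt Dhat Sstar ->
  forall W : 'M[R]_n, (forall i j, W i j = 0 \/ W i j = 1) ->
    frob (hadamard W ((Pt + Sstar) - P))
      <= frob (hadamard W (diag_rowsum Dhat + Dhat)).
Proof.
move=> _ _ _ D0 HD [[_ Hf] Hopt] W HW.
set r := fun i : 'I_n => \sum_j Dhat i j.
have feasD : feasible Dhat (diag_rowsum Dhat).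
  split.
    by rewrite /symmx /diag_rowsum tr_diag_mx.
  move=> i; rewrite [X in _ + X <= _]big1; last first.
    by move=> j ji; rewrite /diag_rowsum !mxE eq_sym (negbTE ji) mulr0n normr0.
  by rewrite addr0 /diag_rowsum !mxE eqxx mulr1n.
have Htr := Hopt _ feasD.
rewrite !mxtraceD lerD2l /diag_rowsum mxtrace_diag in Htr.
set off := fun i : 'I_n => \sum_(j | j != i) `|Sstar i j|.
set e := fun i => Sstar i i - r i - off i.
have e0 : forall i, 0 <= e i by move=> i; rewrite /e subr_ge0 lerBrDr addrC; exact: Hf.
have off0 : forall i, 0 <= off i by move=> i; apply: sumr_ge0 => j _.
have Hsum : \sum_i e i + \sum_i off i = \tr Sstar - \sum_i r i.
  rewrite /e -big_split /= /mxtrace -sumrB; apply: eq_bigr => i _; rewrite /=.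
  by rewrite subrK.
have Hle : \sum_i e i + \sum_i off i <= 0.
  rewrite Hsum subr_le0; apply: le_trans Htr _; apply: ler_sum => i _; rewrite mxE.
  by [].
have se0 : \sum_i e i = 0.
  apply: le_anti; rewrite sumr_ge0 ?andbT; last by move=> i _.
  apply: le_trans Hle; rewrite lerDl; exact: sumr_ge0.
have so0 : \sum_i off i = 0.
  apply: le_anti; rewrite sumr_ge0 ?andbT; last by move=> i _.
  by move: Hle; rewrite se0 add0r.
have ei := psumr_eq0P (fun i _ => e0 i) se0.
have oi := psumr_eq0P (fun i _ => off0 i) so0.
have Sdiag : forall i, Sstar i i = r i + off i.
  move=> i; have := ei i isT; rewrite /e => /eqP; rewrite subr_eq0 subr_eq => /eqP ->.
  by rewrite addrC.
have Soff : forall i j, j != i -> Sstar i j = 0.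
  move=> i j ji; apply/eqP; rewrite -normr_eq0; apply/eqP.
  have := oi i isT; rewrite /off => H.
  exact: (psumr_eq0P (fun k _ => normr_ge0 (Sstar i k)) H).
have Hent : forall i j, `|(Pt + Sstar - P) i j| <= (diag_rowsum Dhat + Dhat) i j.
  move=> i j; rewrite !mxE.
  have [->|ij] := eqVneq i j.
    rewrite mulr1n Sdiag (oi j isT) addr0 addrAC.
    apply: le_trans (ler_normD _ _) _.
    rewrite [`|r j|]ger0_norm; last by apply: sumr_ge0 => k _.
    rewrite [X in X <= _]addrC; apply: lerD; [exact: lexx | exact: HD].
  rewrite mulr0n add0r Soff 1?eq_sym // addr0; exact: HD.
rewrite /frob; apply: ler_wsqrtr; apply: ler_sum => i _; apply: ler_sum => j _.
rewrite /hadamard !mxE.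
have N0 : 0 <= (diag_rowsum Dhat + Dhat) i j.
  exact: le_trans (normr_ge0 _) (Hent i j).
have := Hent i j; rewrite !mxE => H.
case: (HW i j) => ->; first by rewrite !mul0r.
rewrite !mul1r -[X in X <= _]real_normK ?num_real //.
by apply: lerXn2r; rewrite ?nnegrE ?normr_ge0 //; move: N0; rewrite !mxE.
Qed.
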